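(* For $\alpha>1$, integers $k\ge1$ and $n\ge0$, $$\sum_{i=1}^n\ \sum_{k_1+k_2=k}\frac{1}{(10n+10.3-10i)^2\,(10i+0.3)^2}\cdot\frac{k!}{k_1!\,k_2!}\,(k_1+3(n+1-i))^{\alpha(k_1+3(n+1-i))}\,(k_2+3i)^{\alpha(k_2+3i)}$$ $$\le\ \frac{0.05\cdot 4^{-(\alpha-3/2)}}{1-4^{-(\alpha-1)}}\cdot\frac{(k+3(n+1))^{\alpha(k+3(n+1))}}{(10n+10.3)^2},$$ where the inner sum is over nonnegative integers $k_1,k_2$.
   Context: Convention $0^0=1$; an empty sum (when $n=0$) is $0$. *)

(* Defs.v *)
From Stdlib Require Import Reals Factorial.
Open Scope R_scope.

Fixpoint rsum (n : nat) (f : nat -> R) : R :=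
  match n with
  | O => 0
  | S m => rsum m f + f m
  end.

Definition rpow (x y : R) : R := Rpower x y.

(* self power m^(alpha*m) for a natural number m (here always m >= 3 > 0) *)
Definition spow (alpha : R) (m : nat) : R := rpow (INR m) (alpha * INR m).

(* Main.v *)
Require Import Defs.
From Stdlib Require Import Reals Factorial Lia Lra Psatz.
From mathcomp Require ssreflect ssrbool ssrnat eqtype bigop binomial fintype.
From mathcomp Require zify.
Module MC.
Import ssreflect ssrfun ssrbool eqtype ssrnat fintype bigop binomial zify.
Local Open Scope nat_scope.
Lemma expnP m n : expn m n = Nat.pow m n.
Proof. elim: n => [|n IH] //. by rewrite expnS IH. Qed.
Lemma factP n : factorial n = fact n.
Proof. elim: n => [|n IH] //. by rewrite factS IH. Qed.

Lemma vand1 k k1 A B : k1 <= k -> 'C(k,k1) * 'C(A+B,A) <= 'C(k+(A+B), k1+A).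
Proof.
move=> hk. rewrite -(Vandermonde k (A+B) (k1+A)).
have hj : k1 < (k1+A).+1 by rewrite ltnS leq_addr.
rewrite (bigD1 (Ordinal hj)) //= addKn. exact: leq_addr.
Qed.

Lemma binom1 x y : 'C(x+y, x) * (x^x * y^y) <= (x+y)^(x+y).
Proof.
rewrite {2}(addnC x y) expnDn.
have hj : x < (x+y).+1 by rewrite ltnS leq_addr.
rewrite (bigD1 (Ordinal hj)) //= addKn (mulnC (y^y)). exact: leq_addr.
Qed.

Lemma E1 k k1 A B : k1 <= k ->
  'C(k,k1) * 'C(A+B,A) * ((k1+A)^(k1+A) * ((k-k1)+B)^((k-k1)+B)) <= (k+(A+B))^(k+(A+B)).
Proof.
move=> hk.
have e : k + (A+B) = (k1+A) + ((k-k1)+B) by lia.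
rewrite e. apply: leq_trans (binom1 _ _). apply: leq_mul => //.
rewrite -e. exact: vand1.
Qed.

Lemma E2 A B : 1 <= A -> 1 <= B -> A + B <= 'C(A+B, A).
Proof.
move=> hA. case: B => [//|B] _. elim: B => [|B IH].
  by rewrite addn1 binSn.
case: A hA IH => [//|A] _ IH.
rewrite !addnS !addSn binS. rewrite addnS addSn in IH.
have : 0 < 'C((A+B).+2, A) by rewrite bin_gt0; lia.
lia.
Qed.

Lemma expmono m n e : m <= n -> m^e <= n^e.
Proof. move=> h. elim: e => [|e IH] //. rewrite !expnS. exact: leq_mul. Qed.

Lemma E3 x y : x^x * y^y * 4^(minn x y) <= (x+y)^(x+y).
Proof.
wlog hxy : x y / x <= y.
  move=> W. case/orP: (leq_total x y) => h; first exact: W.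
  rewrite minnC addnC (mulnC (x^x)). apply: W. exact: h.
rewrite (minn_idPl hxy).
have [d ->] : exists d, y = x + d by exists (y - x); lia.
have e : x + (x+d) = x + x + d by lia.
rewrite e.
have h1 : x^x * (x+d)^x * 4^x <= (x+x+d)^x * (x+x+d)^x.
  rewrite -!expnMn. apply: expmono. nia.
have h2 : (x+d)^d <= (x+x+d)^d by apply: expmono; lia.
rewrite (expnD (x+d)) (expnD (x+x+d)) (expnD (x+x+d) x x).
move: h1 h2. set a := x^x. set b := (x+d)^x. set c := (x+d)^d. set f := (x+x+d)^x. set g := (x+x+d)^d. set e4 := 4^x.
move=> h1 h2.
have := leq_mul h1 h2. move=> h3. apply: leq_trans h3. apply: eq_leq. lia.
Qed.

Lemma E1P k k1 A B : (k1 <= k)%coq_nat ->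
  (binomial k k1 * binomial (A+B) A * (Nat.pow (k1+A) (k1+A) * Nat.pow (k-k1+B) (k-k1+B))
   <= Nat.pow (k+(A+B)) (k+(A+B)))%coq_nat.
Proof. move=> /leP h. apply/leP. rewrite -!expnP. exact: E1. Qed.
Lemma E2P A B : (1 <= A)%coq_nat -> (1 <= B)%coq_nat -> (A + B <= binomial (A+B) A)%coq_nat.
Proof. move=> /leP h1 /leP h2. apply/leP. exact: E2. Qed.
Lemma E3P x y : (Nat.pow x x * Nat.pow y y * Nat.pow 4 (Nat.min x y) <= Nat.pow (x+y) (x+y))%coq_nat.
Proof.
apply/leP. rewrite -!expnP.
have -> : Nat.min x y = minn x y.
  case/orP: (leq_total x y) => h. rewrite (minn_idPl h). apply/Nat.min_l. by apply/leP.
  rewrite (minn_idPr h). apply/Nat.min_r. by apply/leP.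
exact: E3.
Qed.
Lemma binfactP n p : (p <= n)%coq_nat -> binomial n p * (fact p * fact (n-p)) = fact n.
Proof. move=> /leP h. rewrite -!factP. exact: bin_fact. Qed.
End MC.
Set Bullet Behavior "Strict Subproofs".
Open Scope R_scope.

Lemma E1N (k k1 A B : nat) : (k1 <= k)%nat ->
  (binomial.binomial k k1 * binomial.binomial (A+B) A * (Nat.pow (k1+A) (k1+A) * Nat.pow (k-k1+B) (k-k1+B))
   <= Nat.pow (k+(A+B)) (k+(A+B)))%nat.
Proof. exact (MC.E1P k k1 A B). Qed.
Lemma E2N (A B : nat) : (1 <= A)%nat -> (1 <= B)%nat -> (A + B <= binomial.binomial (A+B) A)%nat.
Proof. exact (MC.E2P A B). Qed.
Lemma E3N (x y : nat) : (Nat.pow x x * Nat.pow y y * Nat.pow 4 (Nat.min x y) <= Nat.pow (x+y) (x+y))%nat.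
Proof. exact (MC.E3P x y). Qed.
Lemma binfactN (n p : nat) : (p <= n)%nat -> (binomial.binomial n p * (fact p * fact (n-p)) = fact n)%nat.
Proof. exact (MC.binfactP n p). Qed.

Lemma rsum_le n f g : (forall j, (j < n)%nat -> f j <= g j) -> rsum n f <= rsum n g.
Proof.
induction n as [|n IH]; intros H; simpl.
- lra.
- apply Rplus_le_compat. apply IH; intros; apply H; lia. apply H; lia.
Qed.
Lemma rsum_ext n f g : (forall j, (j < n)%nat -> f j = g j) -> rsum n f = rsum n g.
Proof.
induction n as [|n IH]; intros H; simpl.
- reflexivity.
- rewrite IH by (intros; apply H; lia). rewrite H by lia. reflexivity.
Qed.
Lemma rsum_scal n c f : rsum n (fun j => c * f j) = c * rsum n f.
Proof. induction n as [|n IH]; simpl. ring. rewrite IH. ring. Qed.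
Lemma rsum_plus n f g : rsum n (fun j => f j + g j) = rsum n f + rsum n g.
Proof. induction n as [|n IH]; simpl. ring. rewrite IH. ring. Qed.
Lemma rsum_const n c : rsum n (fun _ => c) = INR n * c.
Proof. induction n as [|n IH]; simpl rsum. simpl. ring. rewrite IH, S_INR. ring. Qed.

Lemma geom1 r n : 0 <= r < 1 -> rsum n (fun j => r ^ j) <= / (1 - r).
Proof.
intros Hr.
assert (E : rsum n (fun j => r ^ j) * (1 - r) = 1 - r ^ n).
{ induction n as [|n IH]; simpl rsum. simpl. ring. rewrite Rmult_plus_distr_r, IH. simpl. ring. }
assert (0 <= r ^ n) by (apply pow_le; lra).
assert (0 < 1 - r) by lra.
apply (Rmult_le_reg_r (1 - r)); auto. rewrite E, Rinv_l by lra. lra.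
Qed.

Lemma geom2 r k : 0 <= r < 1 -> rsum (S k) (fun j => r ^ (k - j)) <= / (1 - r).
Proof.
intros Hr.
assert (E : forall k, rsum (S k) (fun j => r ^ (k - j)) * (1 - r) = 1 - r ^ (S k)).
{ induction k0 as [|k0 IH].
  - simpl. ring.
  - change (rsum (S (S k0)) (fun j => r ^ (S k0 - j))) with
      (rsum (S k0) (fun j => r ^ (S k0 - j)) + r ^ (S k0 - S k0)).
    rewrite (rsum_ext (S k0) (fun j => r ^ (S k0 - j)) (fun j => r * r ^ (k0 - j))).
    + rewrite rsum_scal, Nat.sub_diag. rewrite Rmult_plus_distr_r, Rmult_assoc, IH. simpl. ring.
    + intros j Hj. replace (S k0 - j)%nat with (S (k0 - j)) by lia. reflexivity. }
assert (0 <= r ^ (S k)) by (apply pow_le; lra).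
assert (0 < 1 - r) by lra.
apply (Rmult_le_reg_r (1 - r)); auto. rewrite E, Rinv_l by lra. lra.
Qed.


Lemma spow_eq (al : R) (x : nat) : (1 <= x)%nat -> spow al x = Rpower (INR (Nat.pow x x)) al.
Proof.
intros Hx. unfold spow, rpow. rewrite pow_INR.
rewrite <- Rpower_pow by (apply lt_0_INR; lia). rewrite Rpower_mult. f_equal; ring.
Qed.

Lemma Rpower_split P al : 0 < P -> Rpower P al = P * Rpower P (al - 1).
Proof. intros. replace al with (1 + (al-1)) at 1 by ring. rewrite Rpower_plus, Rpower_1; auto. Qed.

Lemma INR_pow_pos (x : nat) : (1 <= x)%nat -> 0 < INR (Nat.pow x x).
Proof. intros. rewrite pow_INR. apply pow_lt. apply lt_0_INR. lia. Qed.

Lemma s_gt1 al : 1 < al -> 1 < Rpower 4 (al - 1).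
Proof.
intros Ha. assert (H4 : 0 < ln 4).
{ rewrite <- ln_1. apply ln_increasing. lra. lra. }
unfold Rpower. rewrite <- exp_0 at 1. apply exp_increasing. nra.
Qed.

Lemma term_bound (al : R) (k k1 A B : nat) : 1 < al -> (k1 <= k)%nat -> (1 <= A)%nat -> (1 <= B)%nat ->
  INR (fact k) / (INR (fact k1) * INR (fact (k - k1))) * spow al (k1 + A) * spow al (k - k1 + B)
  <= spow al (k + (A + B)) / INR (A + B) *
     ((/ Rpower 4 (al - 1)) ^ (k1 + A) + (/ Rpower 4 (al - 1)) ^ (k - k1 + B)).
Proof.
intros Ha Hk HA HB.
assert (Hratio : INR (fact k) / (INR (fact k1) * INR (fact (k - k1))) = INR (binomial.binomial k k1)).
{ rewrite <- (binfactN k k1 Hk). rewrite !mult_INR. field. split; apply INR_fact_neq_0. }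
rewrite Hratio.
pose proof (le_INR _ _ (E1N k k1 A B Hk)) as H1. rewrite !mult_INR in H1.
pose proof (le_INR _ _ (E2N A B HA HB)) as H2.
pose proof (le_INR _ _ (E3N (k1 + A) (k - k1 + B))) as H3. rewrite !mult_INR, (pow_INR 4) in H3.
replace (INR 4) with 4 in H3 by (simpl; lra).
assert (HM : (k + (A + B) = (k1 + A) + (k - k1 + B))%nat) by lia.
rewrite HM in H1 |- *.
rewrite !spow_eq by lia.
assert (HX := INR_pow_pos (k1 + A) ltac:(lia)).
assert (HY := INR_pow_pos (k - k1 + B) ltac:(lia)).
assert (HQ := INR_pow_pos (k1 + A + (k - k1 + B)) ltac:(lia)).
set (x := (k1 + A)%nat) in *. set (y := (k - k1 + B)%nat) in *.
set (m := Nat.min x y) in *.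
set (c := INR (binomial.binomial k k1)) in *.
set (b := INR (binomial.binomial (A+B) A)) in *.
set (X := INR (Nat.pow x x)) in *. set (Y := INR (Nat.pow y y)) in *.
set (Q := INR (Nat.pow (x+y) (x+y))) in *.
set (s := Rpower 4 (al - 1)).
assert (Hs : 1 < s) by (apply s_gt1; lra).
assert (Hc : 0 <= c) by (unfold c; apply pos_INR).
clearbody x y c b X Y Q.
assert (HAB : 0 < INR (A + B)) by (apply lt_0_INR; lia).
rewrite Rmult_assoc, (Rpower_mult_distr X Y) by lra.
rewrite (Rpower_split (X*Y)), (Rpower_split Q) by nra.
assert (H4m : 0 < 4 ^ m) by (apply pow_lt; lra).
assert (Hsm : s ^ m = Rpower (4 ^ m) (al - 1)).
{ unfold s. rewrite <- Rpower_pow by (apply exp_pos).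
  rewrite <- (Rpower_pow m 4) by lra. rewrite !Rpower_mult. f_equal; ring. }
assert (Hrs : (/ s) ^ m * s ^ m = 1).
{ rewrite <- Rpow_mult_distr, Rinv_l by lra. apply pow1. }
assert (Hsm0 : 0 < s ^ m) by (apply pow_lt; lra).
assert (Hr0 : 0 < / s) by (apply Rinv_0_lt_compat; lra).
assert (H7 : (/ s) ^ m <= (/ s) ^ x + (/ s) ^ y).
{ assert (0 <= (/s)^x) by (apply pow_le; lra). assert (0 <= (/s)^y) by (apply pow_le; lra).
  unfold m. destruct (Nat.min_spec x y) as [[_ E]|[_ E]]; rewrite E; lra. }
assert (Hrx : 0 <= (/s)^x + (/s)^y).
{ assert (0 <= (/s)^x) by (apply pow_le; lra). assert (0 <= (/s)^y) by (apply pow_le; lra). lra. }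
rewrite Hsm in Hrs, Hsm0.
set (F := 4 ^ m) in *. set (G := (/ s) ^ m) in *. set (Z := (/ s) ^ x + (/ s) ^ y) in *.
clearbody F G Z m s.
assert (H5 : Rpower (X * Y) (al - 1) * Rpower F (al - 1) <= Rpower Q (al - 1)).
{ rewrite Rpower_mult_distr by nra. apply Rle_Rpower_l. lra.
  split. apply Rmult_lt_0_compat; [nra|lra]. exact H3. }
set (RF := Rpower F (al - 1)) in *.
assert (H6 : Rpower (X * Y) (al - 1) <= Rpower Q (al - 1) * G).
{ apply (Rmult_le_reg_r RF); auto. rewrite Rmult_assoc, Hrs, Rmult_1_r. lra. }
assert (H8 : c * (X * Y) <= Q / INR (A + B)).
{ apply (Rmult_le_reg_r (INR (A + B))); auto. unfold Rdiv. rewrite (Rmult_assoc Q), Rinv_l, Rmult_1_r by lra.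
  assert (0 <= c * (X * Y)) by (apply Rmult_le_pos; nra). nra. }
assert (HRP : 0 <= Rpower (X * Y) (al - 1)) by (unfold Rpower; left; apply exp_pos).
assert (HRQ : 0 <= Rpower Q (al - 1)) by (unfold Rpower; left; apply exp_pos).
apply Rle_trans with ((Q / INR (A + B)) * (Rpower Q (al - 1) * Z)).
- rewrite <- Rmult_assoc. apply Rmult_le_compat.
  + apply Rmult_le_pos; nra.
  + exact HRP.
  + exact H8.
  + apply Rle_trans with (1 := H6). apply Rmult_le_compat_l; auto.
- right. unfold Rdiv. ring.
Qed.

Lemma pow_dec3 r A : 0 <= r <= 1 -> (3 <= A)%nat -> r ^ A <= r ^ 3.
Proof.
intros Hr HA. replace A with (3 + (A - 3))%nat by lia. rewrite pow_add.
assert (r ^ (A - 3) <= 1) by (rewrite <- (pow1 (A - 3)); apply pow_incr; lra).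
assert (0 <= r ^ 3) by (apply pow_le; lra). nra.
Qed.

Lemma inner_bound (al : R) (k n j : nat) : 1 < al -> (j < n)%nat ->
  let r := / Rpower 4 (al - 1) in
  rsum (S k) (fun k1 => let k2 := (k - k1)%nat in
      INR (fact k) / (INR (fact k1) * INR (fact k2))
      * spow al (k1 + 3 * (n + 1 - S j))%nat
      * spow al (k2 + 3 * S j)%nat)
  <= spow al (k + 3 * (n + 1))%nat / INR (3 * (n + 1)) * (2 * r ^ 3 / (1 - r)).
Proof.
intros Ha Hj r.
assert (Hs := s_gt1 al Ha).
assert (Hr0 : 0 < r) by (apply Rinv_0_lt_compat; lra).
assert (Hr1 : r < 1).
{ assert (r * Rpower 4 (al - 1) = 1) by (unfold r; field; lra). nra. }
set (K := spow al (k + 3 * (n + 1))%nat / INR (3 * (n + 1))).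
assert (HK : 0 <= K).
{ unfold K, spow, rpow, Rpower. unfold Rdiv. apply Rmult_le_pos. left; apply exp_pos.
  left; apply Rinv_0_lt_compat, lt_0_INR; lia. }
apply Rle_trans with (rsum (S k) (fun k1 => K * (r ^ 3 * r ^ k1 + r ^ 3 * r ^ (k - k1)))).
- apply rsum_le. intros k1 Hk1. cbv beta zeta.
  pose proof (term_bound al k k1 (3 * (n + 1 - S j)) (3 * S j) Ha ltac:(lia) ltac:(lia) ltac:(lia)) as T.
  replace (3 * (n + 1 - S j) + 3 * S j)%nat with (3 * (n + 1))%nat in T by lia.
  fold r in T. fold K in T.
  apply Rle_trans with (1 := T). apply Rmult_le_compat_l; auto.
  assert (r ^ (k1 + 3 * (n + 1 - S j)) <= r ^ 3 * r ^ k1).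
  { rewrite pow_add, Rmult_comm. apply Rmult_le_compat_r. apply pow_le; lra. apply pow_dec3; [lra|lia]. }
  assert (r ^ (k - k1 + 3 * S j) <= r ^ 3 * r ^ (k - k1)).
  { rewrite pow_add, Rmult_comm. apply Rmult_le_compat_r. apply pow_le; lra. apply pow_dec3; [lra|lia]. }
  apply Rplus_le_compat; auto.
- rewrite rsum_scal, rsum_plus, !rsum_scal.
  assert (G1 := geom1 r (S k) ltac:(lra)).
  assert (G2 := geom2 r k ltac:(lra)).
  assert (0 <= r ^ 3) by (apply pow_le; lra).
  apply Rmult_le_compat_l; auto.
  replace (2 * r ^ 3 / (1 - r)) with (r ^ 3 * / (1 - r) + r ^ 3 * / (1 - r)) by (field; lra).
  apply Rplus_le_compat; apply Rmult_le_compat_l; auto.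
Qed.

Theorem corollaryA3 (alpha : R) (k n : nat) :
  1 < alpha -> (1 <= k)%nat ->
  rsum n (fun j => let i := S j in
    rsum (S k) (fun k1 => let k2 := (k - k1)%nat in
      1 / ((10 * INR n + 103 / 10 - 10 * INR i) ^ 2 * (10 * INR i + 3 / 10) ^ 2)
      * (INR (fact k) / (INR (fact k1) * INR (fact k2)))
      * spow alpha (k1 + 3 * (n + 1 - i))%nat
      * spow alpha (k2 + 3 * i)%nat))
  <= (5 / 100) * rpow 4 (- (alpha - 3 / 2)) / (1 - rpow 4 (- (alpha - 1)))
     * (spow alpha (k + 3 * (n + 1))%nat / (10 * INR n + 103 / 10) ^ 2).
Proof.
intros Ha Hk.
assert (Hs := s_gt1 alpha Ha).
set (r := / Rpower 4 (alpha - 1)).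
assert (Hr0 : 0 < r) by (apply Rinv_0_lt_compat; lra).
assert (Hr1 : r < 1).
{ assert (r * Rpower 4 (alpha - 1) = 1) by (unfold r; field; lra). nra. }
assert (Er : rpow 4 (- (alpha - 1)) = r) by (unfold rpow, r; apply Rpower_Ropp).
assert (Er2 : rpow 4 (- (alpha - 3 / 2)) = 2 * r).
{ unfold rpow. replace (- (alpha - 3 / 2)) with (- (alpha - 1) + / 2) by field.
  rewrite Rpower_plus, Rpower_sqrt, Rpower_Ropp by lra. fold r.
  assert (E4 : sqrt 4 = 2) by (replace 4 with (2 * 2) by ring; apply sqrt_square; lra).
  rewrite E4. ring. }
rewrite Er, Er2.
set (p := spow alpha (k + 3 * (n + 1))%nat).
assert (Hp : 0 < p) by (unfold p, spow, rpow, Rpower; apply exp_pos).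
assert (HN0 : 0 <= INR n) by apply pos_INR.
assert (HC1 : 0 < 5 / 100 * (2 * r) / (1 - r)) by (apply Rdiv_lt_0_compat; lra).
assert (HC2 : 0 < p / (10 * INR n + 103 / 10) ^ 2) by (apply Rdiv_lt_0_compat; [auto | apply pow_lt; lra]).
destruct (Nat.eq_dec n 0) as [Hn0 | Hn].
{ subst n. simpl rsum. apply Rlt_le, Rmult_lt_0_compat; assumption. }
assert (HN1 : 1 <= INR n) by (apply (le_INR 1); lia).
set (N := INR n) in *.
apply Rle_trans with (rsum n (fun j => 1 / (10000 * N ^ 2) * (p / INR (3 * (n + 1)) * (2 * r ^ 3 / (1 - r))))).
- apply rsum_le. intros j Hj. cbv zeta.
  set (W := 1 / ((10 * N + 103 / 10 - 10 * INR (S j)) ^ 2 * (10 * INR (S j) + 3 / 10) ^ 2)).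
  rewrite (rsum_ext (S k) _ (fun k1 => W * (INR (fact k) / (INR (fact k1) * INR (fact (k - k1)))
      * spow alpha (k1 + 3 * (n + 1 - S j))%nat * spow alpha (k - k1 + 3 * S j)%nat)))
    by (intros; ring).
  rewrite rsum_scal.
  assert (IB := inner_bound alpha k n j Ha Hj). cbv zeta in IB. fold r p in IB.
  assert (HB0 : 0 <= p / INR (3 * (n + 1)) * (2 * r ^ 3 / (1 - r))).
  { assert (0 < r ^ 3) by (apply pow_lt; lra).
    apply Rmult_le_pos; apply Rlt_le, Rdiv_lt_0_compat; try lra.
    apply lt_0_INR; lia. }
  assert (HJ0 : 1 <= INR (S j)) by (apply (le_INR 1); lia).
  assert (HJN : INR (S j) <= N) by (unfold N; apply le_INR; lia).
  assert (HU : 100 * N <= (10 * N + 103 / 10 - 10 * INR (S j)) * (10 * INR (S j) + 3 / 10)).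
  { assert (0 <= (N - INR (S j)) * (INR (S j) - 1)) by (apply Rmult_le_pos; lra). nra. }
  assert (HW : 0 <= W /\ W <= 1 / (10000 * N ^ 2)).
  { unfold W. unfold Rdiv. rewrite !Rmult_1_l. split.
    - left. apply Rinv_0_lt_compat. rewrite <- Rpow_mult_distr. apply pow_lt. nra.
    - apply Rinv_le_contravar. nra. rewrite <- Rpow_mult_distr. nra. }
  apply Rle_trans with (W * (p / INR (3 * (n + 1)) * (2 * r ^ 3 / (1 - r)))).
  + apply Rmult_le_compat_l; [lra | exact IB].
  + apply Rmult_le_compat_r; [exact HB0 | lra].
- rewrite rsum_const. fold N.
  replace (INR (3 * (n + 1))) with (3 * (N + 1)) by (unfold N; rewrite mult_INR, plus_INR; simpl; ring).
  assert (Hr2 : r ^ 2 <= 1) by nra.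
  replace (N * (1 / (10000 * N ^ 2) * (p / (3 * (N + 1)) * (2 * r ^ 3 / (1 - r)))))
    with (p * r / (1 - r) * (r ^ 2 / (15000 * N * (N + 1)))) by (field; lra).
  replace (5 / 100 * (2 * r) / (1 - r) * (p / (10 * N + 103 / 10) ^ 2))
    with (p * r / (1 - r) * (1 / (10 * (10 * N + 103 / 10) ^ 2))) by (field; lra).
  apply Rmult_le_compat_l.
  + left. apply Rdiv_lt_0_compat; nra.
  + unfold Rdiv. apply Rle_trans with (1 * / (15000 * N * (N + 1))).
    * apply Rmult_le_compat_r; [left; apply Rinv_0_lt_compat; nra | lra].
    * rewrite !Rmult_1_l. apply Rinv_le_contravar; nra.
Qed.
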